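(* Let $D_1,\dots,D_n$ be PvMDs, set $D:=D_1\cap\dots\cap D_n$, and assume $D$ is essential with respect to $\{D_1,\dots,D_n\}$. Then $D$ is a PvMD.
   Context: For an integral domain $R$ with quotient field $K$ and nonzero fractional ideal $I$: $(R:I)=\{x\in K:xI\subseteq R\}$, $I^v=(R:(R:I))$, $I^t=\bigcup\{J^v:J\subseteq I \text{ finitely generated}\}$; $I$ is a $t$-ideal if $I=(0)$ or $I=I^t$; a $t$-prime is a prime $t$-ideal (so $(0)$ is a $t$-prime); $t$-maximal ideals are $t$-ideals maximal among proper $t$-ideals. $R$ is a PvMD if $R_{\mathfrak m}$ is a valuation domain for all $t$-maximal $\mathfrak m$. The $D_i$ are subrings of a common field. $D=\bigcap_i D_i$ is said to be essential with respect to $\{D_i\}$ if the family $\{(D_i)_{\mathfrak q}:\mathfrak q\in t\text{-Spec}(D_i), i\}$ is an essential representation of $D$, i.e. each $(D_i)_{\mathfrak q}$ is a valuation domain equal to $D_{\mathfrak p}$ for some prime $\mathfrak p$ of $D$. *)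

(* Defs.v *)
(* All rings are subrings of a common field K; subsets of K
   are represented as predicates K -> Prop, and equality of subsets is
   extensional (forall x, A x <-> B x). *)
From HB Require Import structures.
From mathcomp Require Import all_boot all_algebra.
Set Implicit Arguments. Unset Strict Implicit. Unset Printing Implicit Defensive.
Import GRing.Theory.
Local Open Scope ring_scope.

Section Defs.
Variable K : fieldType.

Definition is_subring (R : K -> Prop) : Prop :=
  [/\ R 0, R 1, (forall x y, R x -> R y -> R (x - y))
    & (forall x y, R x -> R y -> R (x * y))].

Definition qfield (R : K -> Prop) (x : K) : Prop :=
  exists a b, [/\ R a, R b, b != 0 & x = a / b].

Definition is_ideal (R I : K -> Prop) : Prop :=
  [/\ (forall x, I x -> R x), I 0,
      (forall x y, I x -> I y -> I (x + y))
    & (forall r x, R r -> I x -> I (r * x))].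

Fixpoint span (R : K -> Prop) (s : seq K) (x : K) : Prop :=
  match s with
  | [::] => x = 0
  | a :: s' => exists r y, [/\ R r, span R s' y & x = r * a + y]
  end.

Definition colon (R I : K -> Prop) (x : K) : Prop :=
  qfield R x /\ forall y, I y -> R (x * y).

Definition vclos (R I : K -> Prop) : K -> Prop := colon R (colon R I).

Definition tclos (R I : K -> Prop) (x : K) : Prop :=
  exists s : seq K, [/\ (forall a, a \in s -> I a),
                        (exists2 a, a \in s & a != 0)
                      & vclos R (span R s) x].

Definition is_tideal (R I : K -> Prop) : Prop :=
  is_ideal R I /\
  ((forall x, I x -> x = 0) \/ (forall x, I x <-> tclos R I x)).

Definition proper (R I : K -> Prop) : Prop := exists2 x, R x & ~ I x.

Definition is_prime (R P : K -> Prop) : Prop :=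
  [/\ is_ideal R P, proper R P
    & forall x y, R x -> R y -> P (x * y) -> P x \/ P y].

Definition is_tprime (R P : K -> Prop) : Prop := is_prime R P /\ is_tideal R P.

Definition is_tmaximal (R M : K -> Prop) : Prop :=
  [/\ is_tideal R M, proper R M
    & forall N, is_tideal R N -> proper R N ->
        (forall x, M x -> N x) -> forall x, N x -> M x].

Definition localization (R P : K -> Prop) (x : K) : Prop :=
  exists a s, [/\ R a, R s, ~ P s & x = a / s].

Definition valuation_domain (V : K -> Prop) : Prop :=
  is_subring V /\ forall x, qfield V x -> x != 0 -> V x \/ V x^-1.

Definition PvMD (R : K -> Prop) : Prop :=
  is_subring R /\
  forall M, is_tmaximal R M -> valuation_domain (localization R M).

Definition bigcap (n : nat) (Ds : 'I_n -> K -> Prop) (x : K) : Prop :=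
  forall i, Ds i x.

Definition essential_wrt (n : nat) (Ds : 'I_n -> K -> Prop) : Prop :=
  forall i Q, is_tprime (Ds i) Q ->
    valuation_domain (localization (Ds i) Q) /\
    exists P, is_prime (bigcap Ds) P /\
      forall x, localization (Ds i) Q x <-> localization (bigcap Ds) P x.

End Defs.

(* Main.v *)
Require Import Defs.
From mathcomp Require Import all_boot all_algebra.
From mathcomp Require Import ring.
From mathcomp Require boolp classical_sets.
From Stdlib Require Import Classical.
Set Implicit Arguments. Unset Strict Implicit. Unset Printing Implicit Defensive.
Import GRing.Theory.
Local Open Scope ring_scope.
Local Notation span := Defs.span.
Local Notation proper := Defs.proper.

Section Aux.
Variable K : fieldType.
Implicit Types (R I N P : K -> Prop) (s : seq K) (x y z : K).

Lemma sr0 R : is_subring R -> R 0. Proof. by case. Qed.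
Lemma sr1 R : is_subring R -> R 1. Proof. by case. Qed.
Lemma srB R x y : is_subring R -> R x -> R y -> R (x - y).
Proof. by case=> _ _ h _; apply: h. Qed.
Lemma srM R x y : is_subring R -> R x -> R y -> R (x * y).
Proof. by case=> _ _ _ h; apply: h. Qed.
Lemma srN R x : is_subring R -> R x -> R (- x).
Proof. move=> hR hx; rewrite -sub0r; exact: srB (sr0 hR) hx. Qed.
Lemma srD R x y : is_subring R -> R x -> R y -> R (x + y).
Proof. move=> hR hx hy; rewrite -(opprK y); exact: srB hx (srN hR hy). Qed.

Lemma span_mul R s y z : is_subring R ->
  (forall a, a \in s -> R (y * a)) -> span R s z -> R (y * z).
Proof.
move=> hR; elim: s z => [|a s IH] z /= hs.
  by move=> ->; rewrite mulr0; exact: sr0.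
case=> r [w [hr hw ->]].
rewrite mulrDr mulrCA; apply: srD => //.
  by apply: srM => //; apply: hs; rewrite inE eqxx.
by apply: IH hw => b hb; apply: hs; rewrite inE hb orbT.
Qed.

Lemma span0 R s : is_subring R -> span R s 0.
Proof.
move=> hR; elim: s => [|a s IH] //=; exists 0, 0; split => //; first exact: sr0.
by rewrite mul0r addr0.
Qed.

Lemma span_mem R s a : is_subring R -> a \in s -> span R s a.
Proof.
move=> hR; elim: s => [|b s IH] //= ; rewrite inE => /orP[/eqP ->|h].
  by exists 1, 0; split; [exact: sr1 | exact: span0 | rewrite mul1r addr0].
by exists 0, a; split => //; [exact: sr0 | exact: IH | rewrite mul0r add0r].
Qed.

Lemma span_cat R s t x y : is_subring R -> span R s x -> span R t y ->
  span R (s ++ t) (x + y).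
Proof.
move=> hR; elim: s x => [|a s IH] x /=; first by move=> -> hy; rewrite add0r.
case=> r [w [hr hw ->]] hy; exists r, (w + y); split => //; first exact: IH.
by rewrite addrA.
Qed.

Lemma span_scale R s r x : is_subring R -> R r -> span R s x -> span R s (r * x).
Proof.
move=> hR hr; elim: s x => [|a s IH] x /=; first by move=> ->; rewrite mulr0.
case=> r' [w [hr' hw ->]]; exists (r * r'), (r * w); split.
- exact: srM. - exact: IH. - by rewrite mulrDr mulrA.
Qed.

Lemma qf_of R x : is_subring R -> R x -> qfield R x.
Proof.
move=> hR hx; exists x, 1; split => //; [exact: sr1 | exact: oner_neq0 | by rewrite divr1].
Qed.

Lemma qf_mulR R x a : qfield R x -> is_subring R -> R a -> qfield R (x * a).
Proof.
case=> u [v [hu hv hv0 ->]] hR ha; exists (u * a), v; split => //; first exact: srM.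
by rewrite mulrAC.
Qed.

Lemma colon_spanP R s y : is_subring R ->
  colon R (span R s) y <-> qfield R y /\ forall a, a \in s -> R (y * a).
Proof.
move=> hR; split.
  by case=> hq h; split => // a ha; apply: h; exact: span_mem.
by case=> hq h; split => // z hz; exact: span_mul h hz.
Qed.

Lemma vclos1P R J : is_subring R ->
  vclos R J 1 <-> forall y, colon R J y -> R y.
Proof.
move=> hR; split.
  by case=> _ h y hy; have := h y hy; rewrite mul1r.
move=> h; split; first exact: qf_of hR (sr1 hR).
by move=> y hy; rewrite mul1r; exact: h.
Qed.


Definition Tset R I N := [/\ is_ideal R N, (forall x, I x -> N x) & ~ tclos R N 1].
Definition addl R N x z := exists n r, [/\ N n, R r & z = n + r * x].
Definition maxT R I N := forall N', Tset R I N' -> (forall x, N x -> N' x) ->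
  forall x, N' x -> N x.

Lemma ideal_sub R N x : is_ideal R N -> N x -> R x.
Proof. by case=> h _ _ _; apply: h. Qed.

Lemma addl_ideal R N x : is_subring R -> is_ideal R N -> R x ->
  is_ideal R (addl R N x).
Proof.
move=> hR [hs h0 hadd hmul] hx; split.
- by move=> z [n [r [hn hr ->]]]; apply: srD => //; [exact: hs | exact: srM].
- by exists 0, 0; split => //; [exact: sr0 | rewrite mul0r addr0].
- move=> z w [n [r [hn hr ->]]] [n' [r' [hn' hr' ->]]].
  exists (n + n'), (r + r'); split; [exact: hadd | exact: srD | ring].
- move=> r0 z hr0 [n [r [hn hr ->]]]; exists (r0 * n), (r0 * r); split.
  + exact: hmul. + exact: srM. + ring.
Qed.

Lemma tclos1 R N : is_subring R -> is_ideal R N -> N 1 -> tclos R N 1.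
Proof.
move=> hR hN h1; exists [:: 1]; split.
- by move=> a; rewrite inE => /eqP ->.
- by exists 1; [rewrite inE | exact: oner_neq0].
- apply/vclos1P => // y /colon_spanP [] // _ h.
  by rewrite -(mulr1 y); apply: h; rewrite inE.
Qed.

Lemma maxT_addl R I N : is_subring R -> Tset R I N -> maxT R I N ->
  forall x, R x -> ~ N x -> tclos R (addl R N x) 1.
Proof.
move=> hR [hN hIN hnt] hmax x hx hnx; apply: NNPP => hc; apply: hnx.
have hNa : forall z, N z -> addl R N x z.
  by move=> z hz; exists z, 0; split => //; [exact: sr0 | rewrite mul0r addr0].
apply: (hmax (addl R N x)) => //.
  by split => //; [exact: addl_ideal | move=> z hz; apply: hNa; exact: hIN].
by exists 0, 1; split => //; [case: hN | exact: sr1 | rewrite mul1r add0r].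
Qed.

Lemma maxT_prime R I N : is_subring R -> Tset R I N -> maxT R I N ->
  is_prime R N.
Proof.
move=> hR hT hmax; have hnot := maxT_addl hR hT hmax.
case: hT => hN hIN hnt; split => //.
  exists 1; [exact: sr1 | move=> h1; apply: hnt; exact: tclos1].
move=> x y hx hy hxy; apply: NNPP => hc.
have hnx : ~ N x by move=> h; apply: hc; left.
have hny : ~ N y by move=> h; apply: hc; right.
have [s1 [hs1 [c1 hc1 hc10] hv1]] := hnot x hx hnx.
have [s2 [hs2 [c2 hc2 hc20] hv2]] := hnot y hy hny.
have hA1 : forall a, a \in s1 -> R a.
  by move=> a ha; apply: (ideal_sub (addl_ideal hR hN hx)); apply: hs1.
have [hsub h0 hadd hmul] := hN.
apply: hnt; exists [seq a * b | a <- s1, b <- s2]; split.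
- move=> z /allpairsP [[a b] [ha hb ->]] /=.
  have [n1 [r1 [hn1 hr1 ->]]] := hs1 a ha.
  have [n2 [r2 [hn2 hr2 ->]]] := hs2 b hb.
  have -> : (n1 + r1 * x) * (n2 + r2 * y) =
    (n2 + r2 * y) * n1 + (r1 * x) * n2 + (r1 * r2) * (x * y) by ring.
  apply: (hadd); first apply: (hadd).
  + apply: (hmul) => //; apply: srD => //; [exact: hsub | exact: srM].
  + by apply: (hmul) => //; exact: srM.
  + by apply: (hmul) => //; exact: srM.
- exists (c1 * c2); last exact: mulf_neq0.
  by apply/allpairsP; exists (c1, c2).
- apply/vclos1P => // z /colon_spanP [] // hqz hz.
  move/(vclos1P _ hR): hv1 => hw; apply: hw; apply/colon_spanP => //; split => // a ha.
  move/(vclos1P _ hR): hv2 => hw; apply: hw; apply/colon_spanP => //; split.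
    by apply: qf_mulR hqz hR _; exact: hA1.
  move=> b hb; rewrite -mulrA; apply: hz; apply/allpairsP; by exists (a, b).
Qed.
Lemma maxT_tideal R I N : is_subring R -> Tset R I N -> maxT R I N ->
  is_tideal R N.
Proof.
move=> hR hT hmax; have hnot := maxT_addl hR hT hmax.
case: hT => hN hIN hnt; split => //.
case: (classic (forall x, N x -> x = 0)) => [h|h]; [by left | right].
have [a0 ha0 ha00] : exists2 a, N a & a != 0.
  apply: NNPP => hc; apply: h => x hx; apply/eqP/negPn/negP => hx0.
  by apply: hc; exists x.
move=> x; split.
- move=> hx; exists [:: x; a0]; split.
  + by move=> a; rewrite !inE => /orP[/eqP->|/eqP->].
  + by exists a0 => //; rewrite !inE eqxx orbT.
  + split; first exact: qf_of hR (ideal_sub hN hx).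
    move=> y /colon_spanP [] // _ hy; rewrite mulrC; apply: hy.
    by rewrite inE eqxx.
- case=> s [hs [c hc hc0] hv].
  have hxR : R x.
    rewrite -(mulr1 x); apply: hv.2; split; first exact: qf_of hR (sr1 hR).
    move=> z hz; apply: (span_mul hR) hz => a ha.
    by rewrite mul1r; apply: (ideal_sub hN); exact: hs.
  apply: NNPP => hnx.
  have [s1 [hs1 [c1 hc1 hc10] hv1]] := hnot x hxR hnx.
  have [ns [hns hns']] : exists ns : seq K, (forall n, n \in ns -> N n) /\
      forall e, e \in s1 -> exists n r : K, [/\ n \in ns, R r & e = n + r * x].
    elim: s1 {hc1 hv1} hs1 => [|e s1 IH] hs1.
      by exists [::]; split.
    have [ns [h1 h2]] := IH (fun b hb => hs1 b ltac:(by rewrite inE hb orbT)).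
    have [n [r [hn hr he]]] := hs1 e (mem_head _ _).
    exists (n :: ns); split.
      by move=> m; rewrite inE => /orP[/eqP->|]; [| exact: h1].
    move=> f; rewrite inE => /orP[/eqP->|hf].
      by exists n, r; split => //; rewrite inE eqxx.
    have [m [r' [hm hr' ->]]] := h2 f hf.
    by exists m, r'; split => //; rewrite inE hm orbT.
  apply: hnt; exists (ns ++ s); split.
  + by move=> a; rewrite mem_cat => /orP[]; [exact: hns | exact: hs].
  + by exists c => //; rewrite mem_cat hc orbT.
  + apply/vclos1P => // z /colon_spanP [] // hqz hz.
    have hxz : R (x * z).
      apply: hv.2; apply/colon_spanP => //; split => // a ha.
      by apply: hz; rewrite mem_cat ha orbT.
    move/(vclos1P _ hR): hv1 => hw; apply: hw; apply/colon_spanP => //; split => // e he.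
    have [n [r [hn hr ->]]] := hns' e he.
    rewrite mulrDr; apply: srD => //; first by apply: hz; rewrite mem_cat hn.
    by rewrite mulrCA; apply: srM => //; rewrite mulrC.
Qed.


Lemma Tset_max R I : is_subring R -> Tset R I I ->
  exists N, Tset R I N /\ maxT R I N.
Proof.
move=> hR hI.
pose T := {N : K -> Prop | Tset R I N}.
pose Rl := fun A B : T => boolp.asbool (forall x, sval A x -> sval B x).
have [t ht] : exists t : T, classical_sets.premaximal (fun x y : T => Rl x y) t.
  apply: (@classical_sets.ZL_preorder T (exist _ I hI) Rl).
  - by move=> A; apply/boolp.asboolP.
  - move=> A B C /boolp.asboolP h1 /boolp.asboolP h2; apply/boolp.asboolP => x hx.
    exact: h2 (h1 x hx).
  - move=> A hA.
    have hch : forall s, (forall a, a \in s -> I a \/ exists B : T, A B /\ sval B a) ->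
       (forall a, a \in s -> I a) \/ exists B : T, A B /\ forall a, a \in s -> sval B a.
      elim => [|a s IH] hs; first by left.
      have [hsI|[B [hB hsB]]] :=
        IH (fun b hb => hs b ltac:(by rewrite inE hb orbT)).
      + case: (hs a (mem_head _ _)) => [ha|[B [hB hBa]]].
          by left => b; rewrite inE => /orP[/eqP->|]; [|exact: hsI].
        right; exists B; split => // b; rewrite inE => /orP[/eqP->|hb] //.
        by case: (svalP B) => _ hIB _; apply: hIB; exact: hsI.
      + case: (hs a (mem_head _ _)) => [ha|[B' [hB' hB'a]]].
          right; exists B; split => // b; rewrite inE => /orP[/eqP->|hb].
            by case: (svalP B) => _ hIB _; apply: hIB.
          exact: hsB.
        case: (hA _ _ hB hB') => /boolp.asboolP hle.
        * right; exists B'; split => // b; rewrite inE => /orP[/eqP->|hb] //.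
          exact: hle (hsB b hb).
        * right; exists B; split => // b; rewrite inE => /orP[/eqP->|hb].
            exact: hle.
          exact: hsB.
    pose U z := I z \/ exists B : T, A B /\ sval B z.
    have hIid : is_ideal R I by case: hI.
    have h2 : forall x y, U x -> U y -> forall a, a \in [:: x; y] ->
        I a \/ exists B : T, A B /\ sval B a.
      by move=> x y hx hy a; rewrite !inE => /orP[/eqP->|/eqP->].
    have hU : Tset R I U.
      split; last first.
      + case=> s [hs hnz hv]; case: (hch s hs) => [hsI|[B [hB hsB]]].
          by case: hI => _ _; apply; exists s.
        by case: (svalP B) => _ _; apply; exists s.
      + by move=> x hx; left.
      + split.
        * move=> x [hx|[B [_ hx]]]; first exact: (ideal_sub hIid).
          by case: (svalP B) => hB _ _; exact: (ideal_sub hB hx).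
        * by left; case: hIid.
        * move=> x y hx hy.
          case: (hch _ (h2 x y hx hy)) => [h|[B [hB h]]].
            left; case: hIid => _ _ hadd _; apply: hadd; apply: h.
              by rewrite inE eqxx.
            by rewrite !inE eqxx orbT.
          right; exists B; split => //; case: (svalP B) => [[_ _ hadd _] _ _].
          apply: hadd; apply: h; first by rewrite inE eqxx.
          by rewrite !inE eqxx orbT.
        * move=> r x hr [hx|[B [hB hx]]]; [left | right; exists B; split => //].
            by case: hIid => _ _ _ hmul; exact: hmul.
          by case: (svalP B) => [[_ _ _ hmul] _ _]; exact: hmul.
    exists (exist _ U hU) => B hB; apply/boolp.asboolP => x hx; right; exists B.
    by split.
exists (sval t); split; first exact: (svalP t).
move=> N' hN' hsub x hx.
have /boolp.asboolP h := ht (exist _ N' hN') (introT (boolp.asboolP _) hsub).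
exact: h.
Qed.

Lemma prime_not1 R P : is_subring R -> is_prime R P -> ~ P 1.
Proof.
move=> hR [[hs h0 hadd hmul] [p hp hnp] _] h1; apply: hnp.
by rewrite -(mulr1 p); apply: hmul.
Qed.

Lemma prime_ne0 R P (s : K) : is_prime R P -> ~ P s -> s != 0.
Proof. by case=> [[_ h0 _ _] _ _] hs; apply/eqP => e; apply: hs; rewrite e. Qed.

Lemma loc_subring R P : is_subring R -> is_prime R P ->
  is_subring (localization R P).
Proof.
move=> hR hP; have h1 := prime_not1 hR hP.
have hpr : forall s t : K, R s -> R t -> ~ P s -> ~ P t -> ~ P (s * t).
  by move=> s t hs ht hns hnt hst; case: hP => _ _ hpr; case: (hpr s t hs ht hst).
split.
- by exists 0, 1; split => //; [exact: sr0 | exact: sr1 | rewrite mul0r].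
- by exists 1, 1; split => //; [exact: sr1 | exact: sr1 | rewrite divr1].
- move=> x y [a [s [ha hs hns ->]]] [b [t [hb ht hnt ->]]].
  have hs0 := prime_ne0 hP hns; have ht0 := prime_ne0 hP hnt.
  exists (a * t - b * s), (s * t); split.
  + by apply: srB => //; apply: srM.
  + exact: srM.
  + exact: hpr.
  + by field; rewrite hs0 ht0.
- move=> x y [a [s [ha hs hns ->]]] [b [t [hb ht hnt ->]]].
  have hs0 := prime_ne0 hP hns; have ht0 := prime_ne0 hP hnt.
  exists (a * b), (s * t); split.
  + exact: srM.
  + exact: srM.
  + exact: hpr.
  + by field; rewrite hs0 ht0.
Qed.

Lemma qf_loc R P x : is_subring R -> is_prime R P ->
  qfield (localization R P) x -> qfield R x.
Proof.
move=> hR hP [u [v [[a [s [ha hs hns ->]]] [b [t [hb ht hnt ->]]] hv0 ->]]].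
have hs0 := prime_ne0 hP hns; have ht0 := prime_ne0 hP hnt.
have hb0 : b != 0 by apply: contraNneq hv0 => ->; rewrite mul0r.
exists (a * t), (s * b); split; [exact: srM | exact: srM | exact: mulf_neq0 |].
by field; rewrite hs0 ht0 hb0.
Qed.

Lemma qf_to_loc R P x : is_subring R -> is_prime R P ->
  qfield R x -> qfield (localization R P) x.
Proof.
move=> hR hP [a [b [ha hb hb0 ->]]]; have h1 := prime_not1 hR hP.
exists a, b; split => //.
- by exists a, 1; split => //; [exact: sr1 | rewrite divr1].
- by exists b, 1; split => //; [exact: sr1 | rewrite divr1].
Qed.

Lemma loc_val R P : is_subring R -> is_prime R P ->
  (forall x, qfield R x -> x != 0 ->
     localization R P x \/ localization R P x^-1) ->
  valuation_domain (localization R P).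
Proof.
move=> hR hP h; split; first exact: loc_subring.
by move=> x hx hx0; apply: h => //; exact: qf_loc hR hP hx.
Qed.

End Aux.

Theorem corollary2p15 (K : fieldType) (n : nat) (Ds : 'I_n -> K -> Prop)
  (hPvMD : forall i, PvMD (Ds i))
  (hess : essential_wrt Ds) :
  PvMD (bigcap Ds).
Proof.
have hsub : forall i, is_subring (Ds i) by move=> i; case: (hPvMD i).
have hD : is_subring (bigcap Ds).
  split.
  - by move=> i; exact: sr0.
  - by move=> i; exact: sr1.
  - by move=> x y hx hy i; apply: srB.
  - by move=> x y hx hy i; apply: srM.
have hqfi : forall i x, qfield (bigcap Ds) x -> qfield (Ds i) x.
  by move=> i x [a [b [ha hb hb0 ->]]]; exists a, b; split.
split => // M [hMt hMp hMmax].
have hMi : is_ideal (bigcap Ds) M by case: hMt.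
case: (classic (forall x, M x -> x = 0)) => [hM0|hM0].
  have hMpr : is_prime (bigcap Ds) M.
    split => // x y hx hy hxy; have := hM0 _ hxy; move/eqP; rewrite mulf_eq0.
    by case/orP => /eqP ->; [left|right]; case: hMi.
  apply: loc_val => // x [a [b [ha hb hb0 ->]]] _; left.
  by exists a, b; split => // hMb; move: hb0; rewrite (hM0 _ hMb) eqxx.
have [m0 hm0 hm00] : exists2 m, M m & m != 0.
  apply: NNPP => hc; apply: hM0 => x hx; apply/eqP/negPn/negP => hx0.
  by apply: hc; exists x.
have hMtc : forall x, tclos (bigcap Ds) M x -> M x.
  case: hMt => _ [hz|hr]; last by move=> x /hr.
  by move: hm00; rewrite (hz _ hm0) eqxx.
have hM1 : ~ M 1.
  move=> h1; case: hMp => x hx; apply; rewrite -(mulr1 x).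
  by case: hMi => _ _ _; apply.
have hTM : Tset (bigcap Ds) M M by split => // /hMtc.
have hMpr : is_prime (bigcap Ds) M.
  have [N [hTN hmN]] := Tset_max hD hTM.
  have hNp := maxT_prime hD hTN hmN; have hNt := maxT_tideal hD hTN hmN.
  have hNM : forall x, N x -> M x.
    apply: hMmax => //; last by case: hTN.
    by case: hNp.
  have E : N = M.
    apply: boolp.funext => x; apply: boolp.propext; split; first exact: hNM.
    by case: hTN => _ h _; exact: h.
  by rewrite -E.
pose N0 i x := exists l, (forall a, a \in l -> M a) /\ span (Ds i) l x.
case: (classic (forall i, tclos (Ds i) (N0 i) 1)) => [hall|hall].
  have hF : forall i, exists F : seq K, (forall f, f \in F -> M f) /\
      forall y, qfield (Ds i) y -> (forall f, f \in F -> Ds i (y * f)) -> Ds i y.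
    move=> i; have [s [hs _ hv]] := hall i.
    have [F [hFM hsF]] : exists F : seq K, (forall f, f \in F -> M f) /\
        forall a, a \in s -> exists l, (forall f, f \in l -> f \in F) /\
          span (Ds i) l a.
      elim: s {hv} hs => [|a s IH] hs; first by exists [::].
      have [F [h1 h2]] := IH (fun b hb => hs b ltac:(by rewrite inE hb orbT)).
      have [l [hl hla]] := hs a (mem_head _ _).
      exists (l ++ F); split.
        by move=> f; rewrite mem_cat => /orP[]; [exact: hl | exact: h1].
      move=> b; rewrite inE => /orP[/eqP->|hb].
        by exists l; split => // f hf; rewrite mem_cat hf.
      have [l' [hl' hl'b]] := h2 b hb.
      by exists l'; split => // f hf; rewrite mem_cat hl' ?orbT.
    exists F; split => // y hqy hyF.
    move/(vclos1P _ (hsub i)): hv => hv; apply: hv.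
    apply/colon_spanP => //; split => // a ha.
    have [l [hl hla]] := hsF a ha; apply: (span_mul (hsub i)) hla => f hf.
    by apply: hyF; exact: hl.
  have hall2 : forall js : seq 'I_n, exists F : seq K,
      (forall f, f \in F -> M f) /\ forall i, i \in js -> forall y,
      qfield (Ds i) y -> (forall f, f \in F -> Ds i (y * f)) -> Ds i y.
    elim => [|j js IH]; first by exists [::].
    have [F [h1 h2]] := IH; have [G [g1 g2]] := hF j.
    exists (G ++ F); split.
      by move=> f; rewrite mem_cat => /orP[]; [exact: g1 | exact: h1].
    move=> i; rewrite inE => /orP[/eqP->|hi] y hqy hy.
      by apply: g2 => // f hf; apply: hy; rewrite mem_cat hf.
    by apply: h2 => // f hf; apply: hy; rewrite mem_cat hf orbT.
  have [F [hFM hFi]] := hall2 (enum 'I_n).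
  exfalso; apply: hM1; apply: hMtc; exists (m0 :: F); split.
  - by move=> a; rewrite inE => /orP[/eqP->|]; [| exact: hFM].
  - by exists m0 => //; rewrite inE eqxx.
  - apply/vclos1P => // y /colon_spanP [] // hqy hy i.
    apply: (hFi i) => //; first by rewrite mem_enum.
      exact: hqfi.
    by move=> f hf; apply: hy; rewrite inE hf orbT.
have [i hi] : exists i, ~ tclos (Ds i) (N0 i) 1.
  by apply: not_all_ex_not.
have hN0 : is_ideal (Ds i) (N0 i).
  split.
  - move=> x [l [hl hx]]; rewrite -(mul1r x); apply: (span_mul (hsub i)) hx.
    move=> a ha; rewrite mul1r; have : bigcap Ds a.
      by apply: (ideal_sub hMi); exact: hl.
    by apply.
  - by exists [::].
  - move=> x y [l [hl hx]] [l' [hl' hy]]; exists (l ++ l'); split.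
      by move=> a; rewrite mem_cat => /orP[]; [exact: hl | exact: hl'].
    exact: span_cat.
  - move=> r x hr [l [hl hx]]; exists l; split => //; exact: span_scale.
have hMN0 : forall x, M x -> N0 i x.
  move=> x hx; exists [:: x]; split; first by move=> a; rewrite inE => /eqP ->.
  by apply: span_mem => //; rewrite inE.
have hT : Tset (Ds i) (N0 i) (N0 i) by split.
have [Q [hTQ hmQ]] := Tset_max (hsub i) hT.
have hQp := maxT_prime (hsub i) hTQ hmQ.
have hQt := maxT_tideal (hsub i) hTQ hmQ.
have [hval [P [hP hPeq]]] := hess i Q (conj hQp hQt).
have hMQ : forall x, M x -> Q x by move=> x hx; case: hTQ => _ h _; apply: h; exact: hMN0.
have hMP : forall m, M m -> P m.
  move=> m hm; apply: NNPP => hnm.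
  have hmD : bigcap Ds m by exact: (ideal_sub hMi).
  have hm0' := prime_ne0 hP hnm.
  have : localization (bigcap Ds) P m^-1.
    by exists 1, m; split => //; [exact: sr1 | rewrite mul1r].
  move/hPeq => [a [s [ha hs hns he]]].
  have hs0 := prime_ne0 hQp hns.
  apply: hns; have -> : s = a * m.
    have -> : a = m^-1 * s by rewrite he mulfVK.
    by rewrite mulrAC mulVf // mul1r.
  by case: hQp => [[_ _ _ hmul] _ _]; apply: hmul => //; exact: hMQ.
apply: loc_val => // x hqx hx0.
have hqx' : qfield (localization (Ds i) Q) x.
  by apply: qf_to_loc => //; exact: hqfi.
case: (hval.2 x hqx' hx0) => /hPeq [a [s [ha hs hns he]]]; [left|right];
  by exists a, s; split => // /hMP.
Qed.
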